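(* Let $X$ be a finite connected simplicial complex, $\hat X$ its first barycentric subdivision, and $\delta$ a cellular perversity. Let $\hat\Delta,\hat\Delta'$ be simplices of $\hat X$ with $\hat\Delta$ a codimension-one face of $\hat\Delta'$, and suppose $\hat\Delta\subseteq{}^{-\delta}\Delta$ and $\hat\Delta'\subseteq{}^{-\delta}\Delta'$ for simplices $\Delta,\Delta'$ of $X$. Then $\Delta\leftrightarrow\Delta'$ and $\Delta\ge\Delta'$ in $\Lambda(X,\delta)$.
   Context: Simplices are open; $\Delta\leftrightarrow\Delta'$ means one is a face of the other. Cellular perversity: $\delta:\mathbb Z_{\ge0}\to\mathbb Z$, $\delta(0)=0$, bijective from each $\{0,\dots,k\}$ onto an interval $\{a,\dots,a+k\}$, $a\le0$; $\delta(\Delta)=\delta(\dim\Delta)$. A simplex $\hat\Delta$ of $\hat X$ has vertices the barycenters $c_0,\dots,c_s$ of simplices $\Delta_0,\dots,\Delta_s$ of $X$; $\max_{-\delta}\hat\Delta$ is the $c_i$ with $-\delta(\Delta_i)$ maximal; ${}^{-\delta}\Delta=\bigsqcup_{\max_{-\delta}\hat\Delta=c}\hat\Delta$ for $\Delta$ with barycenter $c$. $\Lambda(X,\delta)$: $\Delta\ge\Delta'$ iff there is a chain $\Delta=\Delta_0,\dots,\Delta_r=\Delta'$ ($r\ge0$) with $\Delta_i\leftrightarrow\Delta_{i+1}$, $\delta(\Delta_i)=\delta(\Delta_{i+1})+1$. *)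

(* Defs.v *)
From mathcomp Require Import all_boot all_order all_algebra.
Set Implicit Arguments. Unset Strict Implicit. Unset Printing Implicit Defensive.
Import Order.TTheory GRing.Theory Num.Theory.

Section Defs.
Variable V : finType.

Definition simplicial_complex (K : {set {set V}}) : Prop :=
  (forall s, s \in K -> s != set0) /\
  (forall s t : {set V}, s \in K -> t \subset s -> t != set0 -> t \in K).

Definition vertex_of (K : {set {set V}}) (v : V) : bool := [set v] \in K.
Definition edge_rel (K : {set {set V}}) : rel V := fun u v => [set u; v] \in K.

Definition sc_connected (K : {set {set V}}) : Prop :=
  forall u v, vertex_of K u -> vertex_of K v -> connect (edge_rel K) u v.

Definition sdim (s : {set V}) : nat := #|s|.-1.

Definition face_rel (s t : {set V}) : bool := (s \subset t) || (t \subset s).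

Definition cellular_perversity (d : nat -> int) : Prop :=
  d 0%N = 0%R /\
  forall k : nat, exists a : int, (a <= 0)%R /\
    (forall i j, (i <= k)%N -> (j <= k)%N -> d i = d j -> i = j) /\
    (forall i, (i <= k)%N -> (a <= d i <= a + k%:Z)%R) /\
    (forall z : int, (a <= z <= a + k%:Z)%R -> exists2 i, (i <= k)%N & d i = z).

Definition pdelta (d : nat -> int) (s : {set V}) : int := d (sdim s).

(* Simplices of the barycentric subdivision \hat X: nonempty chains
   Delta_0 < ... < Delta_s of simplices of X (the vertex c_i of \hat Delta
   is the barycenter of Delta_i, identified with Delta_i). *)
Definition bsimplex (K : {set {set V}}) (c : {set {set V}}) : Prop :=
  c != set0 /\ c \subset K /\
  (forall a b : {set V}, a \in c -> b \in c -> (a \subset b) || (b \subset a)).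

Definition bcodim1_face (c c' : {set {set V}}) : Prop :=
  c \subset c' /\ #|c'| = #|c|.+1.

Definition is_max_mdelta (d : nat -> int) (c : {set {set V}}) (s : {set V}) : Prop :=
  s \in c /\ forall t : {set V}, t \in c -> (- pdelta d t <= - pdelta d s)%R.

(* ^{-delta}Delta, as the set of (open) simplices of \hat X composing it:
   \hat Delta lies in ^{-delta}Delta iff max_{-delta} \hat Delta = c_Delta *)
Definition in_mdelta_star (K : {set {set V}}) (d : nat -> int)
  (c : {set {set V}}) (s : {set V}) : Prop :=
  bsimplex K c /\ is_max_mdelta d c s.

Definition lambda_step (K : {set {set V}}) (d : nat -> int) : rel {set V} :=
  fun s t => [&& s \in K, t \in K, face_rel s t &
                 pdelta d s == (pdelta d t + 1)%R].

Definition lambda_ge (K : {set {set V}}) (d : nat -> int) (s t : {set V}) : Prop :=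
  exists p : seq {set V}, path (lambda_step K d) s p /\ last s p = t.

End Defs.

(* Main.v *)
Require Import Defs.
From mathcomp Require Import all_boot all_order all_algebra.
From mathcomp Require Import zify.
Import Order.TTheory GRing.Theory Num.Theory.

Lemma mid_set (V : finType) (A B : {set V}) (k : nat) :
  A \subset B -> #|A| <= k <= #|B| ->
  exists u : {set V}, [/\ A \subset u, u \subset B & #|u| = k].
Proof.
move=> AB /andP[].
move eqm: (#|B| - k) => m; elim: m k eqm => [|m IH] k eqm hA hB.
  exists B; split=> //; lia.
have [u [Au uB cu]] : exists u : {set V}, [/\ A \subset u, u \subset B & #|u| = k.+1].
    by apply: IH; lia.
have: A \proper u by rewrite properEcard Au; lia.
case/properP=> _ [x xu xA].
exists (u :\ x); split.
- apply/subsetP=> y yA; rewrite !inE (subsetP Au) // andbT.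
  by apply/eqP=> e; rewrite -e yA in xA.
- exact: subset_trans (subD1set u x) uB.
- by have := cardsD1 x u; rewrite xu; lia.
Qed.

Lemma mid_face (V : finType) (A B : {set V}) (k : nat) :
  A \subset B -> 0 < k <= #|B| ->
  exists u : {set V}, [/\ u \subset B, #|u| = k & face_rel u A].
Proof.
move=> AB /andP[k0 kB].
case: (leqP k #|A|) => kA.
  have [u [_ uA cu]] := @mid_set V set0 A k (sub0set A) ltac:(by rewrite cards0 kA).
  by exists u; split=> //; [exact: subset_trans uA AB | rewrite /face_rel uA].
have [u [Au uB cu]] := @mid_set V A B k AB ltac:(by rewrite (ltnW kA) kB).
by exists u; split=> //; rewrite /face_rel Au orbT.
Qed.

Section Key.
Variables (V : finType) (K : {set {set V}}) (d : nat -> int).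
Hypothesis hK : simplicial_complex K.
Hypothesis hd : cellular_perversity d.

Lemma cardKpos (s : {set V}) : s \in K -> 0 < #|s|.
Proof. by move=> /hK.1; rewrite card_gt0. Qed.

Lemma key_dir (s t : {set V}) (N : nat) : s \in K -> t \in K ->
  s \subset t \/ t \subset s ->
  (pdelta d s - pdelta d t)%R = Posz N -> lambda_ge K d s t.
Proof.
elim: N s t => [|N IH] s t sK tK st hN.
- exists [::]; split=> //=.
  set n := sdim (s :|: t).
  have hs : sdim s <= n by rewrite /n /sdim; have := subsetUl s t; move/subset_leq_card; lia.
  have ht : sdim t <= n by rewrite /n /sdim; have := subsetUr s t; move/subset_leq_card; lia.
  have [a [_ [inj _]]] := hd.2 n.
  have e : sdim s = sdim t by apply: inj => //; move: hN; rewrite /pdelta; lia.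
  have := cardKpos _ sK; have := cardKpos _ tK; move: e; rewrite /sdim => e s0 t0.
  case: st => st; [apply/eqP | apply/esym/eqP]; rewrite eqEcard st /=; lia.
-
  pose n := sdim (s :|: t).
  have hs : sdim s <= n by rewrite /n /sdim; have := subsetUl s t; move/subset_leq_card; lia.
  have ht : sdim t <= n by rewrite /n /sdim; have := subsetUr s t; move/subset_leq_card; lia.
  have [a [a0 [inj [bnd onto]]]] := hd.2 n.
  have := bnd _ hs; have := bnd _ ht; move: hN; rewrite /pdelta => hN b1 b2.
  have [i iN di] := onto (d (sdim s) - 1)%R ltac:(lia).
  have [B [A [AB BK defs]]] : exists B A : {set V}, [/\ A \subset B, B \in K &
      (s :|: t = B /\ ((s = A /\ t = B) \/ (s = B /\ t = A)))].
    case: st => st.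
      exists t, s; split=> //; split; [exact/setUidPr | by left].
    exists s, t; split=> //; split; [exact/setUidPl | by right].
  have Bp := cardKpos _ BK.
  have [u [uB cu fu]] := @mid_face V A B i.+1 AB ltac:(move: iN; rewrite /n /sdim (proj1 defs); lia).
  have uK : u \in K by apply: (hK.2 _ _ BK uB); rewrite -card_gt0 cu.
  have su : face_rel s u /\ (u \subset t \/ t \subset u).
    case: defs => _ [[-> ->]|[-> ->]]; move: fu; rewrite /face_rel => fu.
      by split; [rewrite orbC | left].
    split; first by rewrite uB orbT. by case/orP: fu => h; [left|right].
  have du : sdim u = i by rewrite /sdim cu.
  have [p [hp lp]] := IH u t uK tK su.2 ltac:(rewrite /pdelta du di; lia).
  exists (u :: p); split=> //=.
  rewrite hp andbT /lambda_step sK uK su.1 /pdelta du di /=.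
  by rewrite GRing.subrK.
Qed.
End Key.

Theorem lemma3p2p2 (V : finType) (K : {set {set V}}) (d : nat -> int)
  (hK : simplicial_complex K) (hconn : sc_connected K)
  (hd : cellular_perversity d)
  (c c' : {set {set V}}) (D D' : {set V})
  (hc : bsimplex K c) (hc' : bsimplex K c') (hface : bcodim1_face c c')
  (hD : D \in K) (hD' : D' \in K)
  (hcD : in_mdelta_star K d c D) (hcD' : in_mdelta_star K d c' D') :
  face_rel D D' /\ lambda_ge K d D D'.
Proof.
case: hcD => _ [Dc _]; case: hcD' => _ [D'c' mx].
have Dc' : D \in c' by apply: (subsetP hface.1).
have fr : face_rel D D' by rewrite /face_rel; apply: hc'.2.2.
split=> //.
have le := mx _ Dc'.
apply: (@key_dir V K d hK hd D D' `|(pdelta d D - pdelta d D')%R|%N) => //.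
  by case/orP: fr; [left|right].
move: le; rewrite lerN2 => le; rewrite gez0_abs //; lia.
Qed.
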